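(* Let $\mathbf{A}'$ be an $n\times d$ matrix, $k\ge 1$, $\varepsilon\in(0,1)$, and suppose the maximum coverage optimum $\mathbf{OPT}$ of $\mathbf{A}'$ with $k$ subsets satisfies $\mathbf{OPT}\le C_1\, k\log d/\varepsilon^2$ for a constant $C_1$. Then the number of large items in $\mathbf{A}'$ is $O(k\log d/\varepsilon^2)$.
   Context: Item $i$ belongs to subset (column) $j$ iff $A'_{ij}\neq 0$. $\mathbf{OPT}$ is the maximum over sets of $k$ columns of the number of rows having a nonzero entry in at least one of those columns. An item (row) is large if it has at least $d/k$ nonzero entries. The implied constant in $O(\cdot)$ depends only on $C_1$. *)

(* Defs.v *)
From HB Require Import structures.
From mathcomp Require Import all_boot all_order all_algebra.
From mathcomp Require Import reals exp.
Set Implicit Arguments. Unset Strict Implicit. Unset Printing Implicit Defensive.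
Import Order.TTheory GRing.Theory Num.Theory.
Local Open Scope ring_scope.

Section Coverage.
Variables (R : realType) (n d : nat).
Implicit Type A : 'M[R]_(n, d).

(* Item (row) i belongs to subset (column) j iff A i j != 0. *)
Definition coverage A (S : {set 'I_d}) : nat :=
  #|[set i : 'I_n | [exists j in S, A i j != 0]]|.

Definition max_coverage A (k : nat) : nat :=
  (\max_(S : {set 'I_d} | (#|S| <= k)%N) coverage A S)%N.

Definition row_nnz A (i : 'I_n) : nat := #|[set j : 'I_d | A i j != 0]|.

Definition large_item A (k : nat) (i : 'I_n) : bool :=
  (d%:R / k%:R <= (row_nnz A i)%:R :> R).

Definition num_large A (k : nat) : nat := #|[set i | large_item A k i]|.
End Coverage.

(* Main.v *)
Require Import Defs.
From HB Require Import structures.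
From mathcomp Require Import all_boot all_order all_algebra.
From mathcomp Require Import reals exp.
From mathcomp Require Import zify.
Import Order.TTheory GRing.Theory Num.Theory.

Lemma bern (x j : nat) : (x ^ j.+1 + j * x ^ j <= (x + 1) ^ j * x)%N.
Proof.
elim: j => [|j IH]; first by rewrite expn0 expn1 mul0n addn0 mul1n.
rewrite !expnS.
have H : ((x+1) * (x ^ j.+1 + j * x ^ j) <= (x+1) * ((x + 1) ^ j * x))%N.
  by rewrite leq_mul2l IH orbT.
rewrite expnS in H.
set y := (x ^ j) in H *. set z := ((x+1)^j) in H *. nia.
Qed.

Lemma half_bound (k : nat) : (1 <= k)%N -> (2 * (k.-1) ^ k <= k ^ k)%N.
Proof.
case: k => [//|k] _ /=.
case: k => [|k]; first by [].
have := bern k.+1 k.+2.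
rewrite addn1.
set a := (k.+1 ^ k.+2)%N. set b := (k.+2 ^ k.+2)%N.
rewrite expnS -/a.
move=> H.
have : (2 * a * k.+1 <= b * k.+1)%N.
  rewrite -mulnA [(a * _)%N]mulnC. nia.
by rewrite leq_mul2r.
Qed.

Lemma miss_bound (d k m : nat) : (1 <= k)%N -> (d <= k * m)%N ->
  (2 * (d - m) ^ k <= d ^ k)%N.
Proof.
move=> k1 dkm.
have h1 : (k * (d - m) <= k.-1 * d)%N by nia.
have h2 : ((k * (d - m)) ^ k <= (k.-1 * d) ^ k)%N by rewrite leq_exp2r.
rewrite !expnMn in h2.
have h3 : (2 * k.-1 ^ k <= k ^ k)%N by apply: half_bound.
have h4 : (k ^ k * (2 * (d - m) ^ k) <= k ^ k * d ^ k)%N.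
  move: h2 h3; set P := (k ^ k)%N; set Q := ((d - m) ^ k)%N; set K := (k.-1 ^ k)%N; set D := (d ^ k)%N.
  move=> h2 h3.
  have : (2 * (P * Q) <= P * D)%N.
    apply: (leq_trans (leq_mul (leqnn 2) h2)).
    rewrite mulnA mulnC [(P * D)%N]mulnC leq_mul2l; apply/orP; right; exact h3.
  by rewrite mulnCA.
by rewrite leq_pmul2l ?expn_gt0 ?k1 in h4.
Qed.

Lemma card_as_sum (T : finType) (P : pred T) :
  #|[set x | P x]| = (\sum_x (if P x then 1 else 0))%N.
Proof. by rewrite -sum1dep_card big_mkcond. Qed.

Lemma main_nat (R : realType) (n d k : nat) (A : 'M[R]_(n, d)) :
  (0 < d)%N -> (1 <= k)%N -> (num_large A k <= 2 * max_coverage A k)%N.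
Proof.
move=> d0 k1.
pose cov i (f : {ffun 'I_k -> 'I_d}) := [exists x, A i (f x) != 0%R].
have ha : forall f, (#|[set i | cov i f]| <= max_coverage A k)%N.
  move=> f.
  have -> : #|[set i | cov i f]| = coverage A (f @: setT).
    apply: eq_card => i; rewrite !inE.
    apply/existsP/existsP => [[x Hx]|[j /andP [/imsetP [x _ ->] Hx]]].
      by exists (f x); rewrite imset_f ?inE.
    by exists x.
  apply: leq_bigmax_cond.
  apply: (leq_trans (leq_imset_card _ _)).
  by rewrite cardsT card_ord.
have hb : forall i, large_item A k i -> (d ^ k <= 2 * #|[set f | cov i f]|)%N.
  move=> i.
  rewrite /large_item ler_pdivrMr ?ltr0n // -natrM ler_nat => hl.
  set Z := [set j | A i j == 0%R].
  have hZ : #|Z| = (d - row_nnz A i)%N.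
    have := cardsC [set j | A i j != 0%R].
    have -> : ~: [set j | A i j != 0%R] = Z by apply/setP => j; rewrite !inE negbK.
    rewrite card_ord /row_nnz. move: (#|[set j | A i j != 0%R]|) => s; move: #|Z| => z hh; lia.
  have hN : #|[set f | ~~ cov i f]| = ((d - row_nnz A i) ^ k)%N.
    rewrite -hZ -[k in (_ ^ k)%N]card_ord -card_ffun_on.
    apply: eq_card => f; rewrite inE; apply/idP/idP.
      move=> H; apply/ffun_onP => x; rewrite inE.
      by move: H; rewrite negb_exists => /forallP /(_ x); rewrite negbK.
    move/ffun_onP => H; rewrite negb_exists; apply/forallP => x.
    by have := H x; rewrite inE negbK.
  have hT := cardsC [set f | cov i f].
  have e : ~: [set f | cov i f] = [set f | ~~ cov i f] by apply/setP => f; rewrite !inE.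
  rewrite e hN card_ffun !card_ord in hT.
  have hm : (2 * (d - row_nnz A i) ^ k <= d ^ k)%N.
    by apply: miss_bound => //; rewrite mulnC.
  lia.
have hsum : (num_large A k * d ^ k <= 2 * (d ^ k * max_coverage A k))%N.
  rewrite /num_large -sum1dep_card big_distrl /=.
  apply: (leq_trans (n := (\sum_(i | large_item A k i) 2 * #|[set f | cov i f]|)%N)).
    by apply: leq_sum => i /hb; rewrite mul1n.
  apply: (leq_trans (n := (\sum_i 2 * #|[set f | cov i f]|)%N)).
    rewrite [X in (_ <= X)%N](bigID (fun i => large_item A k i)) /=.
    exact: leq_addr.
  rewrite -big_distrr /= leq_mul2l; apply/orP; right.
  under eq_bigr do rewrite card_as_sum.
  rewrite exchange_big /=.
  under eq_bigr do rewrite -card_as_sum.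
  apply: (@leq_trans (\sum_(f : {ffun 'I_k -> 'I_d}) max_coverage A k)); first by apply: leq_sum => f _; exact: ha.
  by rewrite sum_nat_const card_ffun !card_ord.
have hpos : (0 < d ^ k)%N by rewrite expn_gt0 d0.
by rewrite mulnCA mulnC leq_pmul2l in hsum.
Qed.

Local Open Scope ring_scope.

Theorem lemma8 (R : realType) (C1 : R) :
  exists C : R, forall (n d k : nat) (eps : R) (A : 'M[R]_(n, d)),
    (0 < d)%N -> (1 <= k)%N -> 0 < eps < 1 ->
    (max_coverage A k)%:R <= C1 * k%:R * ln d%:R / eps ^+ 2 ->
    (num_large A k)%:R <= C * k%:R * ln d%:R / eps ^+ 2.
Proof.
exists (2 * C1) => n d k eps A d0 k1 _ hopt.
have h := @main_nat R n d k A d0 k1.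
have h' : (num_large A k)%:R <= 2 * (max_coverage A k)%:R :> R.
  by move: h; rewrite -(ler_nat R) natrM.
apply: (le_trans h').
have -> : 2 * C1 * k%:R * ln d%:R / eps ^+ 2 = 2 * (C1 * k%:R * ln d%:R / eps ^+ 2).
  by rewrite !mulrA.
by apply: ler_wpM2l.
Qed.
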